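(* Let $(a_n)_n=[a_{n\varepsilon}]_{\mathrm s}\in\widetilde{\mathbb C}_{\mathrm s}$. Assume that there are $k=[k_\varepsilon]\in\widetilde{\mathbb N}$ with $k_\varepsilon\in\mathbb N$ and $L=[L_\varepsilon]\in\widetilde{\mathbb R}_{>0}$ such that for all sufficiently small $\varepsilon$ and all $n\in\mathbb N$ with $n\ge k_\varepsilon$ (and $n\ge1$), $$|a_{n\varepsilon}|^{1/n}\le L_\varepsilon .$$ If $L<1$, then the hyperseries $\sum_{n\in\widetilde{\mathbb N}}|a_n|$ (where $(|a_n|)_n:=[|a_{n\varepsilon}|]_{\mathrm s}$) converges, and hence also $\sum_{n\in\widetilde{\mathbb N}}a_n$ converges.
   Context: Fix $I=(0,1]$ and a gauge $\rho=(\rho_\varepsilon)_{\varepsilon\in I}$ with $\rho_\varepsilon\in I$ and $\rho_\varepsilon\to0$ as $\varepsilon\to0$. ''$\forall^0\varepsilon$'' means ''for all sufficiently small $\varepsilon\in I$''. A net $(x_\varepsilon)\in\mathbb C^I$ is $\rho$-moderate ($(x_\varepsilon)\in\mathbb C_\rho$) if $\exists N\in\mathbb N\,\forall^0\varepsilon:|x_\varepsilon|\le\rho_\varepsilon^{-N}$, and $\rho$-negligible if $\forall q\in\mathbb N\,\forall^0\varepsilon:|x_\varepsilon|\le\rho_\varepsilon^q$. $\widetilde{\mathbb C}:=\mathbb C_\rho/\{\text{negligible nets}\}$ with classes $[x_\varepsilon]$; $\widetilde{\mathbb R}\subseteq\widetilde{\mathbb C}$ consists of classes of real moderate nets; $\mathrm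 d\rho:=[\rho_\varepsilon]$, $|[z_\varepsilon]|:=[|z_\varepsilon|]$. On $\widetilde{\mathbb R}$: $[x_\varepsilon]\le[y_\varepsilon]$ iff $x_\varepsilon\le y_\varepsilon+z_\varepsilon$ $\forall^0\varepsilon$ for some negligible $(z_\varepsilon)$; $x<y$ iff $\exists m\,\forall^0\varepsilon:y_\varepsilon-x_\varepsilon>\rho_\varepsilon^m$; $\widetilde{\mathbb R}_{>0}:=\{x:x>0\}$. Hypernatural numbers: $\widetilde{\mathbb N}:=\{[n_\varepsilon]\in\widetilde{\mathbb R}:n_\varepsilon\in\mathbb N\ \forall\varepsilon\}$; for each $N\in\widetilde{\mathbb N}$ a representative $(\mathrm{ni}(N)_\varepsilon)$ with all $\mathrm{ni}(N)_\varepsilon\in\mathbb N$ is fixed. Hyperlimit: for a map $n\in\widetilde{\mathbb N}\mapsto a_n\in\widetilde{\mathbb C}$, $l=\lim_{n\in\widetilde{\mathbb N}}a_n$ means $\forall q\in\mathbb N\,\exists M\in\widetilde{\mathbb N}\,\forall n\in\widetilde{\mathbb N}:n\ge M\Rightarrow|a_n-l|<\mathrm d\rho^q$. Hyperseries: a net $(a_{n\varepsilon})_{n\in\mathbb N,\varepsilon\in I}$ of complex numbers is moderate over hypersums if for every $N\in\widetilde{\mathbb N}$ the net $(\sum_{n=0}^{\mathrm{ni}(N)_\varepsilon}a_{n\varepsilon})_\varepsilon$ is $\rho$-moderate; two such nets $(a_{n\varepsilon}),(\bar a_{n\varepsilon})$ are equivalent if for all $N,M\in\widetilde{\mathbb N}$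 the net $(\sum_{n=\mathrm{ni}(N)_\varepsilon}^{\mathrm{ni}(M)_\varepsilon}(a_{n\varepsilon}-\bar a_{n\varepsilon}))_\varepsilon$ is negligible. The quotient is $\widetilde{\mathbb C}_{\mathrm s}$ (resp. $\widetilde{\mathbb R}_{\mathrm s}$ for real nets), with classes $(a_n)_n=[a_{n\varepsilon}]_{\mathrm s}$. For $N,M\in\widetilde{\mathbb N}$, $\sum_{n=N}^Ma_n:=[\sum_{n=\mathrm{ni}(N)_\varepsilon}^{\mathrm{ni}(M)_\varepsilon}a_{n\varepsilon}]$ (empty sums equal $0$). The hyperseries $\sum_{n\in\widetilde{\mathbb N}}a_n$ converges to $s$ if $s=\lim_{N\in\widetilde{\mathbb N}}\sum_{n=0}^Na_n$ exists in $\widetilde{\mathbb C}$. *)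

(* Defs.v *)
From Stdlib Require Import Reals List.
From Coquelicot Require Import Coquelicot.
Open Scope R_scope.

(* Index set I = (0,1]; nets are functions R -> _ only used on I. *)

Definition is_gauge (rho : R -> R) : Prop :=
  (forall e, 0 < e <= 1 -> 0 < rho e <= 1) /\
  (forall d, 0 < d -> exists e0, 0 < e0 /\
      forall e, 0 < e < e0 -> e <= 1 -> rho e < d).

Definition eventually0 (P : R -> Prop) : Prop :=
  exists e0, 0 < e0 /\ forall e, 0 < e < e0 -> e <= 1 -> P e.

Definition moderateC (rho : R -> R) (x : R -> C) : Prop :=
  exists N : nat, eventually0 (fun e => Cmod (x e) <= / (rho e ^ N)).
Definition negligibleC (rho : R -> R) (x : R -> C) : Prop :=
  forall q : nat, eventually0 (fun e => Cmod (x e) <= rho e ^ q).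
Definition moderateR (rho : R -> R) (x : R -> R) : Prop :=
  exists N : nat, eventually0 (fun e => Rabs (x e) <= / (rho e ^ N)).
Definition negligibleR (rho : R -> R) (x : R -> R) : Prop :=
  forall q : nat, eventually0 (fun e => Rabs (x e) <= rho e ^ q).

(* order on R~, at the level of representatives *)
Definition leRt (rho : R -> R) (x y : R -> R) : Prop :=
  exists z, negligibleR rho z /\ eventually0 (fun e => x e <= y e + z e).
Definition ltRt (rho : R -> R) (x y : R -> R) : Prop :=
  exists m : nat, eventually0 (fun e => y e - x e > rho e ^ m).

Definition hypernat (rho : R -> R) (n : R -> nat) : Prop :=
  moderateR rho (fun e => INR (n e)).

(* finite sum  sum_{n=lo}^{hi} f n  (empty, i.e. 0, if hi < lo) *)
Definition csum (f : nat -> C) (lo hi : nat) : C :=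
  fold_right Cplus (RtoC 0) (map f (seq lo (S hi - lo))).

Definition hpsum (a : nat -> R -> C) (N : R -> nat) : R -> C :=
  fun e => csum (fun n => a n e) 0 (N e).

Definition mod_hypersums (rho : R -> R) (a : nat -> R -> C) : Prop :=
  forall N, hypernat rho N -> moderateC rho (hpsum a N).

(* hyperlimit of a map Ñ -> C~ (given on representatives) *)
Definition hyperlimit (rho : R -> R) (f : (R -> nat) -> (R -> C)) (l : R -> C)
  : Prop :=
  forall q : nat, exists M, hypernat rho M /\
    forall n, hypernat rho n ->
      leRt rho (fun e => INR (M e)) (fun e => INR (n e)) ->
      ltRt rho (fun e => Cmod (f n e - l e)) (fun e => rho e ^ q).

Definition hyperseries_converges (rho : R -> R) (a : nat -> R -> C) : Prop :=
  mod_hypersums rho a /\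
  exists s, moderateC rho s /\ hyperlimit rho (hpsum a) s.

Definition nroot (n : nat) (x : R) : R :=
  if Req_EM_T x 0 then 0 else Rpower x (/ INR n).

(* Main.v *)
Require Import Defs.
From Stdlib Require Import Reals.
From Coquelicot Require Import Coquelicot.
From Stdlib Require Import List Lra Lia ZArith.
Open Scope R_scope.

Lemma ev_and (P Q : R -> Prop) : eventually0 P -> eventually0 Q ->
  eventually0 (fun e => P e /\ Q e).
Proof.
  intros [e1 [h1 H1]] [e2 [h2 H2]]. exists (Rmin e1 e2). split.
  - apply Rmin_pos; auto.
  - intros e He He1. pose proof (Rmin_l e1 e2). pose proof (Rmin_r e1 e2).
    split; [apply H1|apply H2]; auto; lra.
Qed.

Lemma ev_mono (P Q : R -> Prop) : (forall e, P e -> Q e) ->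
  eventually0 P -> eventually0 Q.
Proof. intros H [e0 [h H0]]. exists e0. split; auto. Qed.

Lemma gauge_small rho d : is_gauge rho -> 0 < d ->
  eventually0 (fun e => 0 < rho e <= 1 /\ rho e < d).
Proof.
  intros [G1 G2] hd. destruct (G2 d hd) as [e0 [h0 H0]].
  exists (Rmin e0 1). split. apply Rmin_pos; lra.
  intros e He He1. pose proof (Rmin_l e0 1). pose proof (Rmin_r e0 1).
  split. apply G1; lra. apply H0; lra.
Qed.

Lemma fold_Cplus (l : list C) x : fold_right Cplus x l = (fold_right Cplus 0 l + x)%C.
Proof. induction l; simpl. ring. rewrite IHl. ring. Qed.

Lemma csum0 g : csum g 0 0 = g 0%nat.
Proof. unfold csum; simpl. ring. Qed.

Lemma csumS g j : csum g 0 (S j) = (csum g 0 j + g (S j))%C.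
Proof.
  unfold csum. replace (S (S j) - 0)%nat with (S (S j)) by lia.
  replace (S j - 0)%nat with (S j) by lia.
  rewrite (seq_S (S j)), map_app, fold_right_app. simpl.
  rewrite (fold_Cplus _ (g (S j) + 0)%C). ring.
Qed.

Fixpoint tr (f : nat -> R) (j : nat) : R :=
  match j with O => f O | S p => tr f p + f (S p) end.

Lemma csum_R f j : csum (fun n => RtoC (f n)) 0 j = RtoC (tr f j).
Proof.
  induction j. rewrite csum0. reflexivity.
  rewrite csumS, IHj. simpl. rewrite RtoC_plus. reflexivity.
Qed.

Lemma tr_mono f : (forall n, 0 <= f n) -> forall i j, (i <= j)%nat -> tr f i <= tr f j.
Proof.
  intros Hf i j Hij. induction Hij. lra. simpl. pose proof (Hf (S m)). lra.
Qed.

Lemma tr_nonneg f : (forall n, 0 <= f n) -> forall j, 0 <= tr f j.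
Proof.
  intros Hf j. apply Rle_trans with (tr f 0). simpl; apply Hf. apply tr_mono; auto; lia.
Qed.

Lemma Cmod_csum g j : Cmod (csum g 0 j) <= tr (fun n => Cmod (g n)) j.
Proof.
  induction j. rewrite csum0. simpl; lra.
  rewrite csumS. simpl. eapply Rle_trans. apply Cmod_triangle. lra.
Qed.

Lemma csum_diff g n K : (n <= K)%nat ->
  Cmod (csum g 0 K - csum g 0 n) <= tr (fun i => Cmod (g i)) K - tr (fun i => Cmod (g i)) n.
Proof.
  intros H. induction H.
  - replace (csum g 0 n - csum g 0 n)%C with (RtoC 0) by ring. rewrite Cmod_0. lra.
  - rewrite csumS. replace (csum g 0 m + g (S m) - csum g 0 n)%C
      with ((csum g 0 m - csum g 0 n) + g (S m))%C by ring.
    simpl. eapply Rle_trans. apply Cmod_triangle. lra.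
Qed.

Lemma tail_bound f Lv kk n : 0 <= Lv < 1 ->
  (forall i, (kk <= i)%nat -> (1 <= i)%nat -> f i <= Lv ^ i) -> (kk <= S n)%nat ->
  forall K, (n <= K)%nat -> tr f K - tr f n <= (Lv ^ (S n) - Lv ^ (S K)) / (1 - Lv).
Proof.
  intros HL Hf Hk K HK. induction HK.
  - replace (Lv ^ S n - Lv ^ S n) with 0 by ring. unfold Rdiv. rewrite Rmult_0_l. lra.
  - simpl tr. assert (f (S m) <= Lv ^ S m) by (apply Hf; lia).
    replace ((Lv ^ S n - Lv ^ S (S m)) / (1 - Lv)) with
      ((Lv ^ S n - Lv ^ S m) / (1 - Lv) + Lv ^ S m).
    lra. simpl. field. lra.
Qed.

Lemma tail_bound2 f Lv kk n : 0 <= Lv < 1 ->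
  (forall i, (kk <= i)%nat -> (1 <= i)%nat -> f i <= Lv ^ i) -> (kk <= S n)%nat ->
  forall K, (n <= K)%nat -> tr f K - tr f n <= Lv ^ (S n) / (1 - Lv).
Proof.
  intros HL Hf Hk K HK. eapply Rle_trans. eapply tail_bound; eauto.
  unfold Rdiv. apply Rmult_le_compat_r. apply Rlt_le, Rinv_0_lt_compat; lra.
  pose proof (pow_le Lv (S K)). lra.
Qed.

Lemma bern x j : 0 <= x <= 1 -> (1 - x) ^ j * (1 + INR j * x) <= 1.
Proof.
  intros Hx. induction j. simpl; lra.
  rewrite S_INR. simpl pow. pose proof (pow_le (1 - x) j ltac:(lra)).
  assert (INR j >= 0) by (apply Rle_ge, pos_INR).
  assert (A : (1 - x) * (1 + (INR j + 1) * x) <= 1 + INR j * x) by nra.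
  assert (B : (1 - x) ^ j * ((1 - x) * (1 + (INR j + 1) * x)) <= (1 - x) ^ j * (1 + INR j * x))
    by (apply Rmult_le_compat_l; lra).
  nra.
Qed.

Lemma nroot_bound n x l : 0 < l -> 0 <= x -> (1 <= n)%nat -> nroot n x <= l -> x <= l ^ n.
Proof.
  intros Hl Hx Hn H. unfold nroot in H. destruct (Req_EM_T x 0).
  - subst. apply pow_le; lra.
  - set (y := Rpower x (/ INR n)) in *.
    assert (Hy : 0 < y) by (unfold y, Rpower; apply exp_pos).
    assert (x = y ^ n).
    { rewrite <- Rpower_pow by auto. unfold y. rewrite Rpower_mult.
      rewrite Rinv_l. rewrite Rpower_1; lra. apply not_0_INR; lia. }
    rewrite H0. apply pow_incr; lra.
Qed.

Lemma up_nat y : 0 <= y -> y <= INR (Z.to_nat (up y)) <= y + 1.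
Proof.
  intros Hy. destruct (archimed y) as [A B].
  assert (0 <= up y)%Z. { apply le_IZR. lra. }
  rewrite INR_IZR_INZ, Z2Nat.id by auto. lra.
Qed.

Lemma mod_const rho x c N : is_gauge rho -> 0 < c ->
  eventually0 (fun e => Rabs (x e) <= c * / rho e ^ N) -> moderateR rho x.
Proof.
  intros Hg Hc H. exists (S N).
  eapply ev_mono; [|apply ev_and; [apply H|apply (gauge_small rho (/ c) Hg)]].
  2: apply Rinv_0_lt_compat; auto.
  intros e [H1 [H2 H3]]. eapply Rle_trans. apply H1.
  simpl pow. rewrite Rinv_mult.
  apply Rmult_le_compat_r. apply Rlt_le, Rinv_0_lt_compat, pow_lt; lra.
  rewrite <- (Rinv_inv c). apply Rinv_le_contravar; lra.
Qed.

Fixpoint amax (f : nat -> R) (n : nat) : nat :=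
  match n with O => O | S p => let j := amax f p in
    if Rle_dec (f (S p)) (f j) then j else S p end.

Lemma amax_le f n : (amax f n <= n)%nat.
Proof. induction n. simpl; lia. simpl. destruct Rle_dec; lia. Qed.

Lemma amax_max f n : forall i, (i <= n)%nat -> f i <= f (amax f n).
Proof.
  induction n; intros i Hi.
  - replace i with 0%nat by lia. simpl; lra.
  - simpl. destruct (Nat.eq_dec i (S n)).
    + subst. destruct Rle_dec; lra.
    + assert (f i <= f (amax f n)) by (apply IHn; lia). destruct Rle_dec; lra.
Qed.

Lemma term_bound (g : nat -> C) kk B :
  (forall j, (j <= kk)%nat -> Cmod (csum g 0 j) <= B) ->
  forall i, (i <= kk)%nat -> Cmod (g i) <= 2 * B.
Proof.
  intros H i Hi. assert (HB : 0 <= B).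
  { eapply Rle_trans. apply Cmod_ge_0. apply (H 0%nat). lia. }
  destruct i.
  - rewrite <- csum0. specialize (H 0%nat ltac:(lia)). lra.
  - replace (g (S i)) with (csum g 0 (S i) + - csum g 0 i)%C
      by (rewrite csumS; ring).
    eapply Rle_trans. apply Cmod_triangle. rewrite Cmod_opp.
    pose proof (H (S i) Hi). pose proof (H i ltac:(lia)). lra.
Qed.

Lemma tot_bound (f : nat -> R) kk Lv x B :
  (forall n, 0 <= f n) ->
  (forall i, (i <= kk)%nat -> f i <= 2 * B) ->
  (forall i, (kk <= i)%nat -> (1 <= i)%nat -> f i <= Lv ^ i) ->
  0 <= Lv -> 0 < x -> x < 1 - Lv ->
  forall N, tr f N <= (INR kk + 1) * (2 * B) + / x.
Proof.
  intros Hf Hb Ht HL0 Hx Hx1 N.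
  assert (HB : 0 <= 2 * B) by (eapply Rle_trans; [apply (Hf 0%nat)| apply Hb; lia]).
  assert (Hx' : 0 < / x) by (apply Rinv_0_lt_compat; lra).
  assert (Hk : forall j, (j <= kk)%nat -> tr f j <= INR (S j) * (2 * B)).
  { induction j; intros Hj. simpl tr. rewrite S_INR. simpl INR.
    specialize (Hb 0%nat ltac:(lia)). lra.
    simpl tr. specialize (Hb (S j) Hj). specialize (IHj ltac:(lia)).
    rewrite !S_INR in *. nra. }
  assert (Hkk : tr f kk <= (INR kk + 1) * (2 * B)) by (rewrite <- S_INR; apply Hk; lia).
  destruct (Nat.le_gt_cases N kk).
  - pose proof (tr_mono f Hf N kk H). lra.
  - assert (tr f N - tr f kk <= Lv ^ (S kk) / (1 - Lv)).
    { eapply tail_bound2; eauto. lra. lia. }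
    assert (Lv ^ (S kk) <= 1).
    { rewrite <- (pow1 (S kk)). apply pow_incr. lra. }
    assert (Lv ^ (S kk) / (1 - Lv) <= / x).
    { unfold Rdiv. apply Rle_trans with (1 * / (1 - Lv)).
      apply Rmult_le_compat_r. apply Rlt_le, Rinv_0_lt_compat; lra. lra.
      rewrite Rmult_1_l. apply Rinv_le_contravar; lra. }
    lra.
Qed.

Lemma point_tail (f : nat -> R) kk Lv x r j :
  0 < x <= 1 -> 0 <= Lv -> x < 1 - Lv ->
  (forall i, (kk <= i)%nat -> (1 <= i)%nat -> f i <= Lv ^ i) -> 0 < r ->
  (kk <= j)%nat -> 2 * / (r * x * x) <= INR j ->
  forall K, (j <= K)%nat -> tr f K - tr f j <= r / 2.
Proof.
  intros Hx HL Hx1 Ht Hr Hj HJ K HK.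
  eapply Rle_trans. apply (tail_bound2 f Lv kk j). lra. exact Ht. lia. exact HK.
  set (p := (1 - x) ^ j).
  assert (Hp0 : 0 <= p) by (apply pow_le; lra).
  assert (Hp : p * (1 + INR j * x) <= 1) by (apply bern; lra).
  assert (H1 : Lv ^ S j <= p).
  { simpl. apply Rle_trans with (1 * Lv ^ j). apply Rmult_le_compat_r.
    apply pow_le; lra. lra. rewrite Rmult_1_l. apply pow_incr; lra. }
  assert (H2 : Lv ^ S j / (1 - Lv) <= p / x).
  { unfold Rdiv. apply Rmult_le_compat; auto. apply pow_le; lra.
    apply Rlt_le, Rinv_0_lt_compat; lra. apply Rinv_le_contravar; lra. }
  assert (H3 : 2 <= INR j * (r * x * x)).
  { assert (0 < r * x * x) by (repeat apply Rmult_lt_0_compat; lra).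
    apply Rmult_le_compat_r with (r := r * x * x) in HJ. 2: lra.
    rewrite Rmult_assoc, Rinv_l in HJ; lra. }
  assert (H4 : p / x <= r / 2).
  { assert (p * INR j * x <= 1) by nra.
    assert (0 < r * x) by nra.
    assert (p * INR j * x * (r * x) <= 1 * (r * x)) by (apply Rmult_le_compat_r; lra).
    assert (p * 2 <= p * (INR j * (r * x * x))) by (apply Rmult_le_compat_l; lra).
    assert (2 * p <= r * x).
    { replace (p * (INR j * (r * x * x))) with (p * INR j * x * (r * x)) in * by ring. lra. }
    apply Rmult_le_reg_r with x. lra. unfold Rdiv. rewrite Rmult_assoc, Rinv_l; lra. }
  lra.
Qed.

Lemma pinv_ge1 r n : 0 < r <= 1 -> 1 <= / r ^ n.
Proof.
  intros H. rewrite <- Rinv_1. apply Rinv_le_contravar. apply pow_lt; lra.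
  rewrite <- (pow1 n). apply pow_incr; lra.
Qed.

Lemma pinv_add r a b : 0 < r -> / r ^ (a + b) = / r ^ a * / r ^ b.
Proof. intros H. rewrite pow_add, Rinv_mult. reflexivity. Qed.

Lemma mod_C_of_R rho x y : moderateR rho y ->
  eventually0 (fun e => Cmod (x e) <= y e) -> moderateC rho x.
Proof.
  intros [N HN] H. exists N. eapply ev_mono; [|apply ev_and; [apply HN|apply H]].
  intros e [A B]. pose proof (Rle_abs (y e)). lra.
Qed.

Lemma csum_diff_abs g n K :
  Cmod (csum g 0 n - csum g 0 K) <=
  Rabs (tr (fun i => Cmod (g i)) n - tr (fun i => Cmod (g i)) K).
Proof.
  destruct (Nat.le_gt_cases n K).
  - replace (csum g 0 n - csum g 0 K)%C with (- (csum g 0 K - csum g 0 n))%C by ring.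
    rewrite Cmod_opp. eapply Rle_trans. apply csum_diff; auto.
    rewrite Rabs_minus_sym. apply Rle_abs.
  - eapply Rle_trans. apply csum_diff; lia. apply Rle_abs.
Qed.

Lemma hpsum_abs (a : nat -> R -> C) N e :
  hpsum (fun n e => RtoC (Cmod (a n e))) N e = RtoC (tr (fun i => Cmod (a i e)) (N e)).
Proof. unfold hpsum. apply (csum_R (fun i => Cmod (a i e))). Qed.

Theorem theorem2p18 (rho : R -> R) (a : nat -> R -> C) (k : R -> nat)
    (L : R -> R) :
  is_gauge rho ->
  mod_hypersums rho a ->
  hypernat rho k ->
  moderateR rho L ->
  ltRt rho (fun _ => 0) L ->
  eventually0 (fun e => forall n : nat, (k e <= n)%nat -> (1 <= n)%nat ->
                 nroot n (Cmod (a n e)) <= L e) ->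
  ltRt rho L (fun _ => 1) ->
  hyperseries_converges rho (fun n e => RtoC (Cmod (a n e))) /\
  hyperseries_converges rho a.
Proof.
  intros Hg Hma Hk HLm [m0 H0] Hroot [m1 H1].
  destruct Hk as [Nk Hk].
  set (Nmx := fun e => amax (fun i => Cmod (csum (fun n => a n e) 0 i)) (k e)).
  assert (hN : hypernat rho Nmx).
  { exists Nk. eapply ev_mono; [|exact Hk]. intros e He.
    cbv beta in *. rewrite (Rabs_right (INR (k e))) in He by (apply Rle_ge, pos_INR).
    rewrite Rabs_right by (apply Rle_ge, pos_INR).
    eapply Rle_trans; [|exact He]. apply le_INR, amax_le. }
  destruct (Hma Nmx hN) as [NB HB].
  set (good := fun e => (0 < rho e <= 1 /\ rho e < /3) /\ INR (k e) <= / rho e ^ Nk /\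
     L e > rho e ^ m0 /\ 1 - L e > rho e ^ m1 /\
     (forall n, (k e <= n)%nat -> (1<=n)%nat -> nroot n (Cmod (a n e)) <= L e) /\
     Cmod (csum (fun n => a n e) 0 (Nmx e)) <= / rho e ^ NB).
  assert (Hgood : eventually0 good).
  { assert (h3 : 0 < / 3) by lra.
    eapply ev_mono; [|apply ev_and; [apply (gauge_small rho _ Hg h3)|
      apply ev_and; [exact Hk| apply ev_and; [exact H0| apply ev_and; [exact H1|
      apply ev_and; [exact Hroot| exact HB]]]]]].
    intros e [A [B [C [D [E F]]]]]. unfold good. cbv beta in *.
    rewrite Rabs_right in B by (apply Rle_ge, pos_INR).
    unfold hpsum in F. repeat split; try lra; auto. }
  set (Tb := fun e => (INR (k e) + 1) * (2 * / rho e ^ NB) + / rho e ^ m1).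
  assert (Pt : forall e, good e ->
     (forall i, (k e <= i)%nat -> (1 <= i)%nat -> Cmod (a i e) <= L e ^ i) /\
     (forall N, tr (fun n => Cmod (a n e)) N <= Tb e)).
  { intros e [[Gr Gr3] [Gk [GL0 [GL1 [Grt GB]]]]].
    assert (Hm0 : 0 < rho e ^ m0) by (apply pow_lt; lra).
    assert (Hm1 : 0 < rho e ^ m1) by (apply pow_lt; lra).
    assert (Ha : forall i, (k e <= i)%nat -> (1 <= i)%nat -> Cmod (a i e) <= L e ^ i).
    { intros i Hi1 Hi2. apply nroot_bound; auto. lra. apply Cmod_ge_0. }
    split; auto. intros N. unfold Tb.
    apply (tot_bound (fun n => Cmod (a n e)) (k e) (L e) (rho e ^ m1)); auto.
    - intros n; apply Cmod_ge_0.
    - apply (term_bound (fun n => a n e)). intros j Hj.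
      pose proof (amax_max (fun i => Cmod (csum (fun n => a n e) 0 i)) (k e) j Hj) as X.
      cbv beta in X. unfold Nmx in GB. lra.
    all: try lra. }
  assert (HTb : moderateR rho Tb).
  { apply (mod_const rho Tb 5 (Nk + NB + m1)); auto. lra.
    eapply ev_mono; [|exact Hgood]. intros e [[Gr Gr3] [Gk _]].
    rewrite !pinv_add by lra.
    pose proof (pinv_ge1 (rho e) Nk Gr). pose proof (pinv_ge1 (rho e) NB Gr).
    pose proof (pinv_ge1 (rho e) m1 Gr). pose proof (pos_INR (k e)).
    set (u := / rho e ^ Nk) in *. set (v := / rho e ^ NB) in *.
    set (w := / rho e ^ m1) in *. unfold Tb. fold v w.
    rewrite Rabs_right by nra.
    assert (uv : 1 <= u * v) by nra.
    assert ((INR (k e) + 1) * (2 * v) <= 4 * (u * v)) by nra.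
    assert (u * v <= u * v * w) by nra.
    assert (w <= u * v * w) by nra.
    nra. }
  assert (Hmod1 : mod_hypersums rho (fun n e => RtoC (Cmod (a n e)))).
  { intros N _. apply mod_C_of_R with Tb; auto.
    eapply ev_mono; [|exact Hgood]. intros e G.
    rewrite hpsum_abs, Cmod_R, Rabs_right.
    apply (proj2 (Pt e G)). apply Rle_ge, tr_nonneg. intros; apply Cmod_ge_0. }
  set (big := fun e => Z.to_nat (up (/ rho e))).
  set (K := fun e => (k e + Z.to_nat (up (/ rho e ^ big e)))%nat).
  assert (core : forall q, exists M, hypernat rho M /\ forall n, hypernat rho n ->
    leRt rho (fun e => INR (M e)) (fun e => INR (n e)) ->
    eventually0 (fun e => (0 < rho e /\ rho e < / 2) /\
      Rabs (tr (fun i => Cmod (a i e)) (n e) - tr (fun i => Cmod (a i e)) (K e))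
        <= rho e ^ q / 2)).
  { intros q.
    set (y := fun e => 2 * / (rho e ^ q * rho e ^ m1 * rho e ^ m1)).
    assert (yeq : forall e, y e = 2 * / rho e ^ (q + m1 + m1)).
    { intros e. unfold y. rewrite !pow_add. reflexivity. }
    set (Mq := fun e => Z.to_nat (up (y e))).
    assert (HMq : forall e, 0 < rho e -> y e <= INR (Mq e) <= y e + 1).
    { intros e He. apply up_nat. rewrite yeq.
      pose proof (pow_lt (rho e) (q + m1 + m1) He).
      pose proof (Rinv_0_lt_compat _ H). lra. }
    exists (fun e => (k e + Mq e)%nat). split.
    { apply (mod_const rho _ 4 (Nk + (q + m1 + m1))); auto. lra.
      eapply ev_mono; [|exact Hgood]. intros e [[Gr Gr3] [Gk _]].
      destruct (HMq e (proj1 Gr)) as [_ HM2]. rewrite yeq in HM2.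
      rewrite pinv_add by lra.
      pose proof (pinv_ge1 (rho e) Nk Gr). pose proof (pinv_ge1 (rho e) (q + m1 + m1) Gr).
      set (u := / rho e ^ Nk) in *. set (w := / rho e ^ (q + m1 + m1)) in *.
      rewrite plus_INR. pose proof (pos_INR (k e)). pose proof (pos_INR (Mq e)).
      rewrite Rabs_right by lra. nra. }
    intros n hn [z [Hz Hle]].
    assert (hd : 0 < / (INR (q + m1 + m1 + 1) + 1)).
    { apply Rinv_0_lt_compat. pose proof (pos_INR (q + m1 + m1 + 1)). lra. }
    eapply ev_mono; [|apply ev_and; [exact Hgood| apply ev_and; [exact Hle|
      apply ev_and; [apply (Hz 1%nat)| apply (gauge_small rho _ Hg hd)]]]].
    intros e [G [Hle' [Hz' [_ Hd]]]]. cbv beta in *.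
    pose proof G as G'. destruct G' as [[Gr Gr3] [Gk [GL0 [GL1 [Grt GB]]]]].
    destruct (Pt e G) as [Ha _].
    split. lra.
    simpl pow in Hz'.
    assert (HnM : (k e + Mq e <= n e)%nat).
    { assert (INR (k e + Mq e) < INR (S (n e))).
      { rewrite S_INR. pose proof (Rle_abs (z e)). lra. }
      apply INR_lt in H. lia. }
    assert (Hri : 3 < / rho e).
    { rewrite <- (Rinv_inv 3). apply Rinv_lt_contravar. nra. lra. }
    assert (Hbig : (q + m1 + m1 + 1 < big e)%nat).
    { apply INR_lt. assert (INR (q + m1 + m1 + 1) + 1 < / rho e).
      { rewrite <- (Rinv_inv (INR (q + m1 + m1 + 1) + 1)). apply Rinv_lt_contravar.
        pose proof (pos_INR (q + m1 + m1 + 1)). nra. lra. }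
      unfold big. pose proof (up_nat (/ rho e) ltac:(lra)). lra. }
    assert (HMK : (k e + Mq e <= K e)%nat).
    { unfold K. cut (Mq e <= Z.to_nat (up (/ rho e ^ big e)))%nat. lia.
      apply INR_le.
      assert (W1 : 1 <= (/ rho e) ^ (q + m1 + m1)) by (rewrite pow_inv; apply pinv_ge1; lra).
      assert (W2 : (/ rho e) ^ (q + m1 + m1 + 1) <= (/ rho e) ^ big e)
        by (apply Rle_pow; [lra | lia]).
      rewrite pow_add, pow_1 in W2. rewrite !pow_inv in W2.
      assert (0 <= / rho e ^ big e).
      { apply Rlt_le, Rinv_0_lt_compat, pow_lt; lra. }
      pose proof (up_nat (/ rho e ^ big e) H).
      destruct (HMq e (proj1 Gr)) as [_ HM2]. rewrite yeq in HM2.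
      rewrite pow_inv in W1.
      assert (3 * / rho e ^ (q + m1 + m1) <= / rho e ^ (q + m1 + m1) * / rho e) by nra.
      lra. }
    assert (Hx1 : rho e ^ m1 <= 1).
    { rewrite <- (pow1 m1). apply pow_incr; lra. }
    assert (Hx0 : 0 < rho e ^ m1) by (apply pow_lt; lra).
    assert (Hr0 : 0 < rho e ^ q) by (apply pow_lt; lra).
    assert (Hm0 : 0 < rho e ^ m0) by (apply pow_lt; lra).
    assert (tailj : forall j', (k e + Mq e <= j')%nat -> forall K', (j' <= K')%nat ->
       tr (fun i => Cmod (a i e)) K' - tr (fun i => Cmod (a i e)) j' <= rho e ^ q / 2).
    { intros j' Hj' K' HK'.
      apply (point_tail (fun i => Cmod (a i e)) (k e) (L e) (rho e ^ m1) (rho e ^ q) j'); auto.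
      lra. lia.
      destruct (HMq e (proj1 Gr)) as [HM1 _]. unfold y in HM1.
      apply le_INR in Hj'. rewrite plus_INR in Hj'. pose proof (pos_INR (k e)). lra. }
    assert (Hf : forall i, 0 <= Cmod (a i e)) by (intros; apply Cmod_ge_0).
    destruct (Nat.le_gt_cases (n e) (K e)) as [Hc|Hc].
    - pose proof (tailj (n e) HnM (K e) Hc).
      pose proof (tr_mono _ Hf _ _ Hc).
      unfold Rabs; destruct Rcase_abs; lra.
    - pose proof (tailj (K e) HMK (n e) ltac:(lia)).
      pose proof (tr_mono _ Hf (K e) (n e) ltac:(lia)).
      unfold Rabs; destruct Rcase_abs; lra. }
  assert (Hlt : forall q (D : R -> R), eventually0 (fun e => (0 < rho e /\ rho e < / 2) /\
      D e <= rho e ^ q / 2) -> eventually0 (fun e => rho e ^ q - D e > rho e ^ S q)).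
  { intros q D HD. eapply ev_mono; [|exact HD]. intros e [[r1 r2] Hb].
    pose proof (pow_lt (rho e) q r1). simpl pow. nra. }
  split.
  - split; [exact Hmod1|].
    exists (fun e => RtoC (tr (fun i => Cmod (a i e)) (K e))). split.
    + apply mod_C_of_R with Tb; auto.
      eapply ev_mono; [|exact Hgood]. intros e G.
      rewrite Cmod_R, Rabs_right.
      apply (proj2 (Pt e G)). apply Rle_ge, tr_nonneg. intros; apply Cmod_ge_0.
    + intros q. destruct (core q) as [M [hM HM]]. exists M. split; auto.
      intros n hn hle. exists (S q). apply Hlt.
      eapply ev_mono; [|apply (HM n hn hle)]. intros e [A B]. split; auto.
      rewrite hpsum_abs, <- RtoC_minus, Cmod_R. exact B.
  - split; [exact Hma|].
    exists (fun e => csum (fun i => a i e) 0 (K e)). split.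
    + apply mod_C_of_R with Tb; auto.
      eapply ev_mono; [|exact Hgood]. intros e G.
      eapply Rle_trans. apply Cmod_csum. apply (proj2 (Pt e G)).
    + intros q. destruct (core q) as [M [hM HM]]. exists M. split; auto.
      intros n hn hle. exists (S q). apply Hlt.
      eapply ev_mono; [|apply (HM n hn hle)]. intros e [A B]. split; auto.
      eapply Rle_trans; [|exact B]. unfold hpsum.
      apply (csum_diff_abs (fun i => a i e)).
Qed.
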